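(* Let $\lambda_1\neq\lambda_2$ be real numbers, $J_2=\mathrm{diag}(\lambda_1,\lambda_1,\lambda_2)$ and $h>0$. Let $\theta\in\mathbb{R}$ and define $$\phi=\frac{e^{\lambda_1h}-e^{\lambda_2h}}{(\lambda_1-\lambda_2)(1-\theta)+\theta(\lambda_1e^{\lambda_1h}-\lambda_2e^{\lambda_2h})},\qquad \psi=e^{\lambda_1h}(1-\phi\lambda_1\theta)-\phi\lambda_1(1-\theta).$$ Then (whenever these expressions are defined and $1-\phi\lambda_1\theta\neq0$, $1-\phi\lambda_2\theta\neq 0$) the difference scheme $$\frac{\mathbf{x}_{k+1}-\psi\mathbf{x}_k}{\phi}=J_2\big[\theta\mathbf{x}_{k+1}+(1-\theta)\mathbf{x}_k\big]$$ is exact for the system $\mathbf{x}'=J_2\mathbf{x}$.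
   Context: A one-step difference scheme with step size $h>0$ for $\mathbf{x}'=M\mathbf{x}$ is called exact if for every initial vector $\mathbf{x}_0$ the sequence $(\mathbf{x}_k)$ it generates satisfies $\mathbf{x}_k=\mathbf{x}(kh)$ for all $k\ge 0$, where $\mathbf{x}(t)$ solves $\mathbf{x}'=M\mathbf{x}$, $\mathbf{x}(0)=\mathbf{x}_0$. *)

(* Defs.v *)
From HB Require Import structures.
From mathcomp Require Import all_boot all_order all_algebra.
From mathcomp Require Import all_classical all_reals all_analysis.
Set Implicit Arguments. Unset Strict Implicit. Unset Printing Implicit Defensive.
Import Order.TTheory GRing.Theory Num.Theory.
Import numFieldNormedType.Exports.
Local Open Scope ring_scope.

Definition ode_solution (R : realType) (n : nat) (M : 'M[R]_n) (x0 : 'cV[R]_n)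
  (x : R -> 'cV[R]_n) : Prop :=
  x 0 = x0 /\ forall t : R, derivable x t 1 /\ 'D_1 x t = M *m x t.

(* A one-step scheme is given by the relation S x_k x_{k+1} it imposes. *)
Definition exact_scheme (R : realType) (n : nat) (M : 'M[R]_n) (h : R)
  (S : 'cV[R]_n -> 'cV[R]_n -> Prop) : Prop :=
  forall (x0 : 'cV[R]_n) (xs : nat -> 'cV[R]_n),
    xs 0%N = x0 -> (forall k, S (xs k) (xs k.+1)) ->
    forall x : R -> 'cV[R]_n, ode_solution M x0 x ->
    forall k : nat, xs k = x (k%:R * h).

Definition J2 (R : realType) (l1 l2 : R) : 'M[R]_3 :=
  diag_mx (\row_(i < 3) if i == 2 :> nat then l2 else l1).

Definition phi6 (R : realType) (l1 l2 h th : R) : R :=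
  (expR (l1 * h) - expR (l2 * h)) /
  ((l1 - l2) * (1 - th) + th * (l1 * expR (l1 * h) - l2 * expR (l2 * h))).

Definition psi6 (R : realType) (l1 l2 h th : R) : R :=
  expR (l1 * h) * (1 - phi6 l1 l2 h th * l1 * th) - phi6 l1 l2 h th * l1 * (1 - th).

Definition theta_scheme (R : realType) (n : nat) (M : 'M[R]_n) (phi psi th : R)
  (xk xk1 : 'cV[R]_n) : Prop :=
  phi^-1 *: (xk1 - psi *: xk) = M *m (th *: xk1 + (1 - th) *: xk).

(* Main.v *)
Require Import Defs.
From HB Require Import structures.
From mathcomp Require Import all_boot all_order all_algebra.
From mathcomp Require Import all_classical all_reals all_analysis.
From mathcomp Require Import ring lra.
Import Order.TTheory GRing.Theory Num.Theory.
Import numFieldNormedType.Exports.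
Local Open Scope ring_scope.

Lemma scalar_ode (R : realType) (y : R -> R) (l : R) :
  (forall t : R, is_derive t (1:R) y (l * y t)) -> forall t : R, y t = expR (l * t) * y 0.
Proof.
move=> hy t.
pose g := fun s : R => expR (- l * s) * y s.
have hg : forall s : R, is_derive s (1:R) g 0.
  move=> s.
  have hl : is_derive s 1 (fun s : R => - l * s) (- l).
    have h0 := @is_deriveZ R R R id (- l) s 1 1 (is_derive_id _ _).
    rewrite /= in h0; rewrite -[X in is_derive _ _ _ X]mulr1.
    exact: h0.
  have he : is_derive s 1 (expR \o (fun s : R => - l * s)) (expR (- l * s) * (- l)).
    exact: is_derive1_comp.
  have := is_deriveM he (hy s).
  move=> H.
  have -> : g = ((expR \o (fun s : R => - l * s)) * y) by apply/funext.
  apply: (is_derive_eq H).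
  rewrite /= /GRing.scale /=.
  ring.
have := is_derive_0_is_cst 0 t hg.
rewrite /g mulr0 expR0 mul1r => H.
by rewrite H mulrA -expRD mulNr addrN expR0 mul1r.
Qed.

Lemma step_lemma (R : realType) (l p psi th e a b : R) :
  p != 0 -> 1 - p * l * th != 0 -> psi + p * l * (1 - th) = e * (1 - p * l * th) ->
  p^-1 * (a - psi * b) = l * (th * a + (1 - th) * b) -> a = e * b.
Proof.
move=> p0 q0 hk H.
have H' : a - psi * b = p * (l * (th * a + (1 - th) * b)).
  by rewrite -H mulrA divff // mul1r.
have E : (a - e * b) * (1 - p * l * th) =
  (a - psi * b) - p * (l * (th * a + (1 - th) * b))
   + b * ((psi + p * l * (1 - th)) - e * (1 - p * l * th)) by ring.
move: E; rewrite H' hk !subrr mulr0 addr0 => /eqP.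
by rewrite mulf_eq0 (negbTE q0) orbF subr_eq0 => /eqP.
Qed.

Theorem theorem6 (R : realType) (l1 l2 h th : R) :
  l1 != l2 -> 0 < h ->
  (l1 - l2) * (1 - th) + th * (l1 * expR (l1 * h) - l2 * expR (l2 * h)) != 0 ->
  1 - phi6 l1 l2 h th * l1 * th != 0 ->
  1 - phi6 l1 l2 h th * l2 * th != 0 ->
  exact_scheme (J2 l1 l2) h
    (theta_scheme (J2 l1 l2) (phi6 l1 l2 h th) (psi6 l1 l2 h th) th).
Proof.
move=> l12 h0 D0 q1 q2 x0 xs xs0 Hs x [x00 Hx] k.
set p := phi6 l1 l2 h th; set psi := psi6 l1 l2 h th.
pose lam (i : 'I_3) := if i == 2 :> nat then l2 else l1.
have Jc : forall (v : 'cV[R]_3) i, (J2 l1 l2 *m v) i 0 = lam i * v i 0.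
  by move=> v i; rewrite /J2 mul_diag_mx mxE mxE.
have p0 : p != 0.
  rewrite /p /phi6 mulf_eq0 invr_eq0 (negbTE D0) orbF subr_eq0.
  apply/negP => /eqP /expR_inj /(mulIf (lt0r_neq0 h0)) /eqP.
  by rewrite (negbTE l12).
have key : forall i, psi + p * lam i * (1 - th) = expR (lam i * h) * (1 - p * lam i * th).
  move=> i; rewrite /lam; case: ifP => _; last by rewrite /psi /psi6 -/p; ring.
  rewrite /psi /psi6 -/p.
  have : p * ((l1 - l2) * (1 - th) + th * (l1 * expR (l1 * h) - l2 * expR (l2 * h)))
     = expR (l1 * h) - expR (l2 * h) by rewrite /p /phi6 mulfVK.
  move=> E.
  apply/eqP; rewrite -subr_eq0; apply/eqP.
  have Z : expR (l1 * h) - expR (l2 * h) - p * ((l1 - l2) * (1 - th) + th * (l1 * expR (l1 * h) - l2 * expR (l2 * h))) = 0 by rewrite E subrr.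
  rewrite -Z; ring.
have qi : forall i, 1 - p * lam i * th != 0 by move=> i; rewrite /lam; case: ifP.
have disc : forall n i, xs n i 0 = expR (lam i * h) ^+ n * x0 i 0.
  move=> n i; elim: n => [|n IH]; first by rewrite expr0 mul1r xs0.
  rewrite exprS -mulrA -IH.
  apply: (@step_lemma _ _ _ _ _ _ _ _ p0 (qi i) (key i)).
  have := congr1 (fun M : 'cV[R]_3 => M i 0) (Hs n).
  by rewrite /= Jc !mxE.
have cont : forall t i, x t i 0 = expR (lam i * t) * x0 i 0.
  move=> t i; rewrite -x00.
  apply: (@scalar_ode _ (fun t => x t i 0)) => s.
  have [dx Dx] := Hx s.
  have dy : derivable (fun t => x t i 0) s 1 by move/derivable_mxP: dx; apply.
  apply: DeriveDef => //.
  have := congr1 (fun M : 'cV[R]_3 => M i 0) Dx.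
  by rewrite /= (derive_mx dx) mxE Jc.
apply/matrixP => i j; rewrite ord1 disc cont -expRM_natl.
congr (expR _ * _); ring.
Qed.
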